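(* (a) If a topological $G$-system $(X,T)$ is CAM, then it is weakly CAM. (b) If a $\mathbb{Z}$-system $(X,T)$ is expansive and weakly CAM, then it is CAM.
   Context: Let $G$ be a countable discrete group. A topological $G$-system $(X,T)$ consists of a compact metric space $X$ and an action $T\colon G\to\mathrm{Homeo}(X)$, $g\mapsto T_g$; a $\mathbb{Z}$-system is given by one homeomorphism $T$. The system is topologically transitive if for all nonempty open $U,V\subseteq X$ there is $g\in G$ with $T_gU\cap V\neq\emptyset$; the action is faithful if $T_g=\mathrm{id}_X$ only when $g$ is the identity. A point is periodic if its $G$-orbit is finite. The system is chaotic almost minimal (CAM) if: (1) it is topologically transitive and the action is faithful; (2) the periodic points are dense in $X$; (3) every proper closed $T$-invariant subset of $X$ is finite. It is weakly CAM if (1) and (2) hold and (3') every point of $X$ has $G$-orbit that is either finite or dense in $X$. A $\mathbb{Z}$-system is expansive if there is $c>0$ such that for all $x\neq y$ there is $n\in\mathbb{Z}$ with $d(T^nx,T^ny)>c$. *)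

(* Defs.v *)
From HB Require Import structures.
From mathcomp Require Import all_boot all_order all_algebra.
From mathcomp Require Import all_classical all_reals all_analysis.
From mathcomp Require Import monoid.
Set Implicit Arguments.
Unset Strict Implicit.
Unset Printing Implicit Defensive.
Import Order.TTheory GRing.Theory Num.Theory.
Local Open Scope classical_set_scope.
Local Open Scope ring_scope.

Definition homeomorphism (X : topologicalType) (f : X -> X) : Prop :=
  continuous f /\ exists g : X -> X, [/\ cancel f g, cancel g f & continuous g].

Definition G_action (G : groupType) (X : topologicalType) (T : G -> X -> X) : Prop :=
  [/\ T 1%g = id,
      (forall g h : G, T (g * h)%g = T g \o T h)
    & (forall g, homeomorphism (T g))].

(* Generic dynamical notions for a family of maps T : G -> X -> X,
   e is the identity element of G. *)
Section Dyn.
Context {G : Type} (e : G) {X : topologicalType} (T : G -> X -> X).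

Definition orbit (x : X) : set X := [set T g x | g in [set: G]].

Definition topologically_transitive : Prop :=
  forall U V : set X, open U -> open V -> U !=set0 -> V !=set0 ->
    exists g : G, (T g @` U) `&` V !=set0.

Definition faithful : Prop := forall g : G, T g = id -> g = e.

Definition periodic_point (x : X) : Prop := finite_set (orbit x).

Definition invariant (A : set X) : Prop := forall g : G, T g @` A `<=` A.

Definition CAM : Prop :=
  [/\ topologically_transitive /\ faithful,
      dense [set x | periodic_point x]
    & forall A : set X, closed A -> invariant A -> A != [set: X] -> finite_set A].

Definition weakly_CAM : Prop :=
  [/\ topologically_transitive /\ faithful,
      dense [set x | periodic_point x]
    & forall x : X, finite_set (orbit x) \/ dense (orbit x)].
End Dyn.

(* Z-action generated by a homeomorphism T with inverse Tinv: n |-> T^n. *)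
Definition Ziter {X : Type} (T Tinv : X -> X) (n : int) : X -> X :=
  match n with
  | Posz k => iter k T
  | Negz k => iter k.+1 Tinv
  end.

Definition expansive {R : realType} {X : metricType R} (T Tinv : X -> X) : Prop :=
  exists2 c : R, 0 < c &
    forall x y : X, x <> y -> exists n : int, c < mdist (Ziter T Tinv n x) (Ziter T Tinv n y).

(* Main.v *)
Require Import Defs.
From HB Require Import structures.
From mathcomp Require Import all_boot all_order all_algebra.
From mathcomp Require Import all_classical all_reals all_analysis.
From mathcomp Require Import monoid.
From mathcomp Require Import zify ring lra.
Import Order.TTheory GRing.Theory Num.Theory.
Local Open Scope classical_set_scope.
Local Open Scope ring_scope.
Set Implicit Arguments.
Unset Strict Implicit.
Unset Printing Implicit Defensive.

Section Zit.
Context {X : Type} (T Tinv : X -> X) (K1 : cancel T Tinv) (K2 : cancel Tinv T).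
Local Notation f := (Ziter T Tinv).

Lemma Ziter0 x : f 0 x = x. Proof. by []. Qed.

Lemma ZiterS n x : f (n + 1) x = T (f n x).
Proof.
case: n => [k|[|k]] /=.
- by rewrite addn1 iterS.
- by rewrite K2.
- by rewrite subn1 /= K2.
Qed.

Lemma ZiterP n x : f (n - 1) x = Tinv (f n x).
Proof. by rewrite -{2}(subrK 1 n) ZiterS K1. Qed.

Lemma Ziter_add a b x : f (a + b) x = f a (f b x).
Proof.
elim/int_rect: a => [|n IH|n IH]; first by rewrite add0r.
- have -> : (n.+1)%:Z = n%:Z + 1 by lia.
  by rewrite addrAC ZiterS IH -ZiterS.
- have -> : - (n.+1)%:Z = - n%:Z - 1 by lia.
  by rewrite addrAC ZiterP IH -ZiterP.
Qed.
End Zit.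

Section Per.
Context {X : topologicalType} (T Tinv : X -> X) (K1 : cancel T Tinv) (K2 : cancel Tinv T).
Local Notation f := (Ziter T Tinv).

Lemma period z : finite_set (Defs.orbit (Ziter T Tinv) z) ->
  exists2 L : nat, (0 < L)%N & f L%:Z z = z.
Proof.
move=> fin; have [//|H] := pselect (exists2 L : nat, (0 < L)%N & f L%:Z z = z).
exfalso; apply: infinite_nat.
pose g (n : nat) := f n%:Z z.
have key : forall n m, (n < m)%N -> g n = g m -> False.
  move=> n m nm gnm; apply: H; exists (m - n)%N; first by rewrite subn_gt0.
  have -> : (m - n)%N%:Z = - n%:Z + m%:Z by lia.
  rewrite Ziter_add // -/(g m) -gnm /g -Ziter_add //.
  by have -> : - n%:Z + n%:Z = 0 by lia.
have ginj : injective g.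
  move=> n m gnm; case: (ltngtP n m) => // nm; first by case: (key _ _ nm gnm).
  by case: (key _ _ nm (esym gnm)).
apply: (sub_finite_set (B := g @^-1` Defs.orbit f z)).
  by move=> n _; rewrite /g /=; exists n%:Z.
by apply: finite_preimage => // n m _ _; apply: ginj.
Qed.

Lemma periodM z (L : nat) : f L%:Z z = z -> forall k : int, f (L%:Z * k) z = z.
Proof.
move=> hL; have hN : f (- L%:Z) z = z.
  by rewrite -{1}hL -Ziter_add // addNr.
elim/int_rect => [|k IH|k IH]; first by rewrite mulr0.
- have -> : L%:Z * (k.+1)%:Z = L%:Z + L%:Z * k%:Z by lia.
  by rewrite Ziter_add // IH.
- have -> : L%:Z * - (k.+1)%:Z = - L%:Z + L%:Z * - k%:Z by lia.
  by rewrite Ziter_add // IH.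
Qed.
End Per.

Lemma iter_cont {X : topologicalType} (g : X -> X) : continuous g -> forall k, continuous (iter k g).
Proof.
move=> hg; elim => [|k IH] /=; first by move=> x; exact: cvg_id.
by move=> x; apply: continuous_comp; [exact: IH | exact: hg].
Qed.

Lemma Ziter_cont {X : topologicalType} (T Tinv : X -> X) :
  continuous T -> continuous Tinv -> forall n, continuous (Ziter T Tinv n).
Proof. by move=> h1 h2 [k|k] /=; apply: iter_cont. Qed.

Section Met.
Context {R : realType} {X : metricType R}.

Lemma closed_le (u : X -> X) (c : R) : continuous u ->
  closed [set p : X * X | mdist (u p.1) (u p.2) <= c].
Proof.
move=> hu [z w] cl /=; rewrite leNgt; apply/negP => lt.
pose e := (mdist (u z) (u w) - c) / 2.
have e0 : 0 < e by rewrite divr_gt0 // subr_gt0.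
have he : e * 2 = mdist (u z) (u w) - c by rewrite /e mulfVK.
have [[z' w'] [/= hle [h1 h2]]] :
  [set p : X * X | mdist (u p.1) (u p.2) <= c] `&`
  [set p : X * X | mdist (u z) (u p.1) < e /\ mdist (u w) (u p.2) < e] !=set0.
  apply: cl; exists ([set t | mdist (u z) (u t) < e], [set t | mdist (u w) (u t) < e]).
    by split; [exact: (metricType_numDomainType.cvgr_dist_lt (hu z) e0) | exact: (metricType_numDomainType.cvgr_dist_lt (hu w) e0)].
  by move=> [a b] [/= ? ?].
have t1 := metric_triangle (u z) (u z') (u w).
have t2 := metric_triangle (u z') (u w') (u w).
rewrite (metric_sym (u w') (u w)) in t2.
lra.
Qed.

Lemma closed_ge (c : R) : closed [set p : X * X | c <= mdist p.1 p.2].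
Proof.
move=> [z w] cl /=; rewrite leNgt; apply/negP => lt.
pose e := (c - mdist z w) / 2.
have e0 : 0 < e by rewrite divr_gt0 // subr_gt0.
have he : e * 2 = c - mdist z w by rewrite /e mulfVK.
have [[z' w'] [/= hle [h1 h2]]] :
  [set p : X * X | c <= mdist p.1 p.2] `&`
  [set p : X * X | mdist z p.1 < e /\ mdist w p.2 < e] !=set0.
  apply: cl; exists ([set t | mdist z t < e], [set t | mdist w t < e]).
    by split; [exact: (metricType_numDomainType.cvgr_dist_lt (@cvg_id _ (nbhs z)) e0) | exact: (metricType_numDomainType.cvgr_dist_lt (@cvg_id _ (nbhs w)) e0)].
  by move=> [a b] [/= ? ?].
have t1 := metric_triangle z' z w'.
have t2 := metric_triangle z w w'.
rewrite (metric_sym z' z) in t1.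
lra.
Qed.
End Met.

Lemma limit_point {T : topologicalType} (A : set T) : compact A -> ~ finite_set A ->
  exists2 x, A x & forall B, nbhs x B -> exists y, [/\ A y, y <> x & B y].
Proof.
move=> cA infA.
pose F := fun S : set T => exists2 D, finite_set D & A `\` D `<=` S.
have FF : Filter F.
  split.
  - by exists set0; [exact: finite_set0|].
  - move=> P Q [D1 f1 s1] [D2 f2 s2]; exists (D1 `|` D2).
      by rewrite finite_setU; split.
    by move=> a [Aa nD]; split; [apply: s1|apply: s2]; split => // ?; apply: nD; [left|right].
  - by move=> P Q PQ [D fD sD]; exists D => //; apply: subset_trans PQ.
have PF : ProperFilter F.
  apply: Build_ProperFilter_ex => // P [D fD sD].
  have [a [Aa nDa]] : exists a, A a /\ ~ D a.
    apply: contrapT => H; apply: infA; apply: (sub_finite_set _ fD) => a Aa.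
    by apply: contrapT => nDa; apply: H; exists a.
  by exists a; apply: sD.
have FA : F A by exists set0; [exact: finite_set0| move=> a []].
have [x [Ax clx]] := cA F PF FA.
exists x => // B nB.
have FD : F (A `\` [set x]) by exists [set x] => //; exact: finite_set1.
have [y [[Ay nyx] By]] := clx _ _ FD nB.
by exists y; split.
Qed.

Lemma partA (R : realType) (X : metricType R) (G : groupType) (T : G -> X -> X) :
  G_action T -> CAM 1%g T -> weakly_CAM 1%g T.
Proof.
move=> [T1 TM Th] [tf dens cam3]; split => // x.
pose B := closure (Defs.orbit T x).
have [eB|neB] := pselect (B = setT).
- right; move=> W [p0 Wp0] oW.
  have : B p0 by rewrite eB.
  move=> /(_ W (open_nbhs_nbhs (conj oW Wp0))) [y [oy Oy]].
  by exists y.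
- left; apply: (sub_finite_set (@subset_closure _ _)).
  apply: cam3 => //; [exact: closed_closure| |exact/eqP].
  move=> g _ [y By <-] B' nB'.
  have [hg _] := Th g.
  have := By _ (hg y B' nB').
  move=> [q [[h _ <-] /= hB']]; exists (T g (T h x)); split => //.
  by exists (g * h)%g => //; rewrite TM.
Qed.

Section PartB.
Context (R : realType) (X : metricType R) (T Tinv : X -> X).
Local Notation f := (Ziter T Tinv).

Lemma partB : compact [set: X] -> continuous T -> continuous Tinv ->
  cancel T Tinv -> cancel Tinv T -> expansive T Tinv ->
  weakly_CAM 0%Z (Ziter T Tinv) -> CAM 0%Z (Ziter T Tinv).
Proof.
move=> hc cT cTi K1 K2 [c c0 hexp] [tf dens orb]; split => // A clA invA /eqP neA.
apply: contrapT => infA.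
have allper : forall a, A a -> finite_set (Defs.orbit f a).
  move=> a Aa; case: (orb a) => // hd; exfalso; apply: neA.
  apply/seteqP; split => // x _; apply: contrapT => nAx.
  have oA : open (~` A) by rewrite openC.
  have [y [nAy [g _ gy]]] := hd (~` A) (ex_intro _ x nAx) oA.
  by apply: nAy; rewrite -gy; apply: (invA g); exists a.
have cA : compact A := subclosed_compact clA hc (@subsetT _ A).
have [x Ax hx] := limit_point cA infA.
pose E1 (s : int) (j : nat) :=
  [set p : X * X | mdist (f (s * j%:Z) p.1) (f (s * j%:Z) p.2) <= c].
pose Good s N := [set p : X * X | c <= mdist p.1 p.2] `&`
  \bigcap_(j in [set j : nat | (0 < j <= N)%N]) E1 s j.
pose C N := (A `*` A) `&` (Good 1 N `|` Good (-1) N).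
have Gmono : forall s N M, (N <= M)%N -> Good s M `<=` Good s N.
  move=> s N M NM p [h1 h2]; split => // j /andP[j0 jN]; apply: h2.
  by rewrite /= j0 /=; exact: leq_trans jN NM.
have Gclosed : forall s N, closed (Good s N).
  move=> s N; apply: closedI; first exact: closed_ge.
  by apply: closed_bigI => j _; apply: closed_le; exact: Ziter_cont.
have one : forall k : nat, \forall y \near x,
    mdist (f k%:Z x) (f k%:Z y) < c /\ mdist (f (- k%:Z) x) (f (- k%:Z) y) < c.
  move=> k.
  have a : \forall y \near x, mdist (f k%:Z x) (f k%:Z y) < c.
    exact: (metricType_numDomainType.cvgr_dist_lt (@Ziter_cont _ T Tinv cT cTi k%:Z x) c0).
  have b : \forall y \near x, mdist (f (- k%:Z) x) (f (- k%:Z) y) < c.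
    exact: (metricType_numDomainType.cvgr_dist_lt (@Ziter_cont _ T Tinv cT cTi (- k%:Z) x) c0).
  by apply: filterS2 a b => y h1 h2; split.
have nearN : forall N, \forall y \near x, forall k : nat, (k <= N)%N ->
    mdist (f k%:Z x) (f k%:Z y) < c /\ mdist (f (- k%:Z) x) (f (- k%:Z) y) < c.
  elim => [|N IH].
    by apply: filterS (one 0%N) => y h k; rewrite leqn0 => /eqP ->.
  apply: filterS2 IH (one N.+1) => // y h1 h2 k.
  by rewrite leq_eqVlt => /orP[/eqP -> //|]; rewrite ltnS; apply: h1.
have Cne : forall N, C N !=set0.
  move=> N; have [y [Ay yx hy]] := hx _ (nearN N).
  have [n hn] := hexp y x yx.
  pose Q m := c < mdist (f m%:Z y) (f m%:Z x) \/
              c < mdist (f (- m%:Z) y) (f (- m%:Z) x).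
  have exQ : exists m, `[< Q m >].
    case: n hn => [k|k] hk.
      by exists k; apply/asboolP; left.
    by exists k.+1; apply/asboolP; right; rewrite NegzE in hk.
  case: (ex_minnP exQ) => m /asboolP Qm minm.
  have lt_m : forall k, (k < m)%N -> ~ Q k.
    by move=> k km Qk; have := minm k (asboolT Qk); rewrite leqNgt km.
  have Nm : (N < m)%N.
    rewrite ltnNge; apply/negP => mN; have [h1 h2] := hy m mN.
    have s1 := metric_sym (f m%:Z x) (f m%:Z y).
    have s2 := metric_sym (f (- m%:Z) x) (f (- m%:Z) y).
    case: Qm => ?; lra.
  case: Qm => hm.
  - exists (f m%:Z y, f m%:Z x); split.
      by split; apply: (invA m%:Z); [exists y|exists x].
    right; split; first exact: ltW hm.
    move=> j /= /andP[j0 jN].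
    change (mdist (f (-1 * j%:Z) (f m%:Z y)) (f (-1 * j%:Z) (f m%:Z x)) <= c).
    rewrite -!Ziter_add //.
    have -> : -1 * j%:Z + m%:Z = (m - j)%N%:Z by lia.
    have /lt_m nQ : ((m - j) < m)%N by lia.
    by rewrite leNgt; apply/negP => h; apply: nQ; left.
  - exists (f (- m%:Z) y, f (- m%:Z) x); split.
      by split; apply: (invA (- m%:Z)); [exists y|exists x].
    left; split; first exact: ltW hm.
    move=> j /= /andP[j0 jN].
    change (mdist (f (1 * j%:Z) (f (- m%:Z) y)) (f (1 * j%:Z) (f (- m%:Z) x)) <= c).
    rewrite -!Ziter_add //.
    have -> : 1 * j%:Z + - m%:Z = - (m - j)%N%:Z by lia.
    have /lt_m nQ : ((m - j) < m)%N by lia.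
    by rewrite leNgt; apply/negP => h; apply: nQ; right.
have Csub : forall N M, (N <= M)%N -> C M `<=` C N.
  move=> N M NM p [AAp [hp|hp]]; split => //; [left|right]; exact: Gmono hp.
pose Fc := filter_from [set: nat] C.
have FcF : Filter Fc.
  apply: filter_fromT_filter; first by exists 0%N.
  move=> i j; exists (maxn i j) => p Cp; split.
    exact: (Csub _ _ (leq_maxl i j)).
  exact: (Csub _ _ (leq_maxr i j)).
have FcP : ProperFilter Fc by apply: filter_from_proper => // N _; exact: Cne.
have cAA : compact (A `*` A) := compact_setX cA cA.
have FcA : Fc (A `*` A) by exists 0%N => // p [].
have [[z w] [[Az Aw] clu]] := cAA Fc FcP FcA.
have inG : forall N, (Good 1 N `|` Good (-1) N) (z, w).
  move=> N; apply: (closedU (Gclosed 1 N) (Gclosed (-1) N)) => B nB.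
  by apply: clu nB; exists N => // p [].
have [s [hs hG]] : exists s : int, (s = 1 \/ s = -1) /\ forall N, Good s N (z, w).
  have [h1|h1] := pselect (forall N, Good 1 N (z, w)).
    by exists 1; split; [left|].
  move/existsNP: h1 => [N1 nG1]; exists (-1); split; first by right.
  move=> N; case: (inG (maxn N N1)) => h.
  - by exfalso; apply: nG1; exact: (Gmono _ _ _ (leq_maxr N N1) _ h).
  - exact: (Gmono _ _ _ (leq_maxl N N1) _ h).
have [Lz Lz0 hLz] := period K1 K2 (allper z Az).
have [Lw Lw0 hLw] := period K1 K2 (allper w Aw).
pose L := (Lz * Lw)%N.
have pz : forall k : int, f (L%:Z * k) z = z.
  by move=> k; rewrite /L PoszM -mulrA; exact: periodM.
have pw : forall k : int, f (L%:Z * k) w = w.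
  by move=> k; rewrite /L mulnC PoszM -mulrA; exact: periodM.
have zw : z = w.
  apply: contrapT => nzw; have [n hn] := hexp z w nzw.
  pose K : int := n * n + 1.
  have L1 : (1 <= L)%N by rewrite /L muln_gt0 Lz0 Lw0.
  have jpos : 0 < s * n + L%:Z * K.
    have K0 : 0 <= K by rewrite /K; nia.
    have KL : K <= L%:Z * K by nia.
    have : 0 < s * n + K by rewrite /K; case: hs => ->; nia.
    lia.
  pose j := absz (s * n + L%:Z * K).
  have hj : j%:Z = s * n + L%:Z * K by rewrite /j; lia.
  have [_ hb] := hG j.
  have := hb j; rewrite /= leqnn andbT.
  change (((0 < j)%N -> mdist (f (s * j%:Z) z) (f (s * j%:Z) w) <= c) -> False).
  rewrite hj.
  have -> : s * (s * n + L%:Z * K) = n + L%:Z * (s * K) by case: hs => ->; ring.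
  rewrite !Ziter_add // pz pw => h.
  have : (0 < j)%N by lia.
  move=> /h; lra.
have [h0 _] := hG 0%N.
move: h0; rewrite /= zw mdistxx; lra.
Qed.
End PartB.

Unset Implicit Arguments.

Theorem proposition2p15 :
  (* (a) for every topological G-system, CAM implies weakly CAM *)
  (forall (R : realType) (X : metricType R) (G : groupType) (T : G -> X -> X),
      countable [set: G] -> compact [set: X] -> G_action T ->
      CAM 1%g T -> weakly_CAM 1%g T)
  /\
  (* (b) for Z-systems, expansive and weakly CAM implies CAM *)
  (forall (R : realType) (X : metricType R) (T Tinv : X -> X),
      compact [set: X] -> continuous T -> continuous Tinv ->
      cancel T Tinv -> cancel Tinv T ->
      expansive T Tinv ->
      weakly_CAM 0%Z (Ziter T Tinv) -> CAM 0%Z (Ziter T Tinv)).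
Proof.
split.
- by move=> R X G T _ _; exact: partA.
- by move=> R X T Tinv; exact: partB.
Qed.
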